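(* Consider an inter-class orthogonal main effect plan on $n$ runs whose factors are partitioned into $k$ classes, the $i$-th class consisting of factors $F_{i,1},\dots,F_{i,m_i}$, with every level of every factor occurring. Fix a class $i$ and $j\in\{1,\dots,m_i\}$. Then: (a) $X_{i,j}'(I-P_{\mathrm{all}\setminus(i,j)})X_{i,j}=X_{i,j}'(I-P^i_{\bar j})X_{i,j}$ and $X_{i,j}'(I-P_{\mathrm{all}\setminus(i,j)})Y=X_{i,j}'(I-P^i_{\bar j})Y$; that is, the reduced normal equation for $\alpha^{ij}$ (after eliminating all other factors and the general mean) coincides with $C^i_{j;\bar j}\widehat{\alpha^{ij}}=Q^i_{j;\bar j}$, where $C^i_{j;\bar j}=X_{i,j}'(I-P^i_{\bar j})X_{i,j}$ and $Q^i_{j;\bar j}=X_{i,j}'(I-P^i_{\bar j})Y$, obtained by eliminating only the other factors of class $i$ and the general mean. (b) $SS_{(i,j);\mathrm{all}}=SS^i_{j;\mathrm{all}}$ and $SS_{(i,j);\mathrm{all}>}=SS^i_{j;\mathrm{all}>}$. (c) $SS_E=SS_{tot}-\sum_{i=1}^kSS^i_{total}$, where $SS^i_{total}=\sum_{j=1}^{m_i}SS^i_{j;\mathrm{all}>}$.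
   Context: Model: $Y=\mathbf 1_n\mu+\sum_{i,j}X_{i,j}\alpha^{ij}+\epsilon$ with uncorrelated homoscedastic errors, where $X_{i,j}$ is the 0-1 design matrix of $F_{i,j}$ ($(u,t)$ entry $1$ iff $F_{i,j}$ is at level $t$ in run $u$). Two factors $A,B$ are orthogonal if $n_{AB}(s,t)=r_A(s)r_B(t)/n$ for all levels $s,t$ (incidence counts and replications); the plan is inter-class orthogonal if any two factors in different classes are orthogonal. $P_M$ denotes the orthogonal projector onto the column space of the matrix $M$. For a set $\mathcal S$ of factors, $P_{\mathcal S}$ is the projector onto the column space of $[\mathbf 1_n, X_F : F\in\mathcal S]$ (the general mean is always included). For a factor $F$ with design matrix $X_F$ not in $\mathcal S$, the sum of squares of $F$ adjusted for $\mathcal S$ is $SS_{F;\mathcal S}=Y'(I-P_{\mathcal S})X_F[X_F'(I-P_{\mathcal S})X_F]^-X_F'(I-P_{\mathcal S})Y$. Notation: $P_{\mathrm{all}\setminus(i,j)}$ uses all factors other than $F_{i,j}$; $P^i_{\bar j}$ uses the factors $F_{i,l}$, $l\neq j$ (of class $i$ only). Order all factors lexicographically: $F_{1,1},\dots,F_{1,m_1},F_{2,1},\dots,F_{k,m_k}$. $SS_{(i,j);\mathrm{all}}$ = SS of $F_{i,j}$ adjusted for all other factors; $SS_{(i,j);\mathrm{all}>}$ = SS of $F_{i,j}$ adjusted for all factors after it in this global order; $SS^i_{j;\mathrm{all}}$ = SS of $F_{i,j}$ adjusted for $F_{i,l}$, $l\neq j$; $SS^i_{j;\mathrm{all}>}$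 = SS of $F_{i,j}$ adjusted for $F_{i,j+1},\dots,F_{i,m_i}$ (for $j=m_i$, adjusted for the general mean only). $SS_{tot}=\sum_uY_u^2-(\sum_uY_u)^2/n$; $SS_E$ is the residual sum of squares of the full model. *)

(* Defs.v *)
From HB Require Import structures.
From mathcomp Require Import all_boot all_order all_algebra.
Set Implicit Arguments. Unset Strict Implicit. Unset Printing Implicit Defensive.
Import Order.TTheory GRing.Theory Num.Theory.
Local Open Scope ring_scope.

(* Factor index type: factor F_{i,j} is the pair (i, j), i : 'I_k a class,
   j : 'I_(m i) a factor of that class. *)
Definition factor (k : nat) (m : 'I_k -> nat) : finType := {i : 'I_k & 'I_(m i)}.

Definition design (R : nzRingType) (n sF : nat) (lev : 'I_n -> 'I_sF)
  : 'M[R]_(n, sF) := \matrix_(u, t) (lev u == t)%:R.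

Definition repl (n sA : nat) (levA : 'I_n -> 'I_sA) (a : 'I_sA) : nat :=
  #|[set u : 'I_n | levA u == a]|.
Definition incid (n sA sB : nat) (levA : 'I_n -> 'I_sA) (levB : 'I_n -> 'I_sB)
  (a : 'I_sA) (b : 'I_sB) : nat :=
  #|[set u : 'I_n | (levA u == a) && (levB u == b)]|.

Definition orth_factors (n sA sB : nat) (levA : 'I_n -> 'I_sA)
  (levB : 'I_n -> 'I_sB) : Prop :=
  forall a b, (incid levA levB a b)%:R = (repl levA a)%:R * (repl levB b)%:R / n%:R :> rat.

(* Orthogonal projector onto the column space of M: M (M'M)^- M', with the
   generalized inverse pinvmx (which satisfies A A^- A = A). *)
Definition projM (R : fieldType) (n p : nat) (M : 'M[R]_(n, p)) : 'M[R]_n :=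
  M *m pinvmx (M^T *m M) *m M^T.

(* A matrix whose ROW space is the span of 1_n and the columns of X_F, F in S;
   its transpose therefore has column space = col space of [1_n, X_F : F in S]. *)
Definition span_set (R : fieldType) (I : finType) (n : nat) (s : I -> nat)
  (lev : forall F : I, 'I_n -> 'I_(s F)) (S : pred I) : 'M[R]_n :=
  (<<const_mx 1 : 'M[R]_(1, n)>> + \sum_(F | S F) <<(design R (lev F))^T>>)%MS.

Definition projS (R : fieldType) (I : finType) (n : nat) (s : I -> nat)
  (lev : forall F : I, 'I_n -> 'I_(s F)) (S : pred I) : 'M[R]_n :=
  projM (span_set R lev S)^T.

Definition SSadj (R : fieldType) (n p : nat) (X : 'M[R]_(n, p)) (P : 'M[R]_n)
  (Y : 'cV[R]_n) : R :=
  let Q := 1%:M - P in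
  (Y^T *m Q *m X *m pinvmx (X^T *m Q *m X) *m X^T *m Q *m Y) 0 0.

Definition SSfac (R : fieldType) (I : finType) (n : nat) (s : I -> nat)
  (lev : forall F : I, 'I_n -> 'I_(s F)) (F : I) (S : pred I) (Y : 'cV[R]_n) : R :=
  SSadj (design R (lev F)) (projS R lev S) Y.

Definition all_but (k : nat) (m : 'I_k -> nat) (F : factor m) : pred (factor m) :=
  fun G => G != F.
Definition class_but (k : nat) (m : 'I_k -> nat) (F : factor m) : pred (factor m) :=
  fun G => (tag G == tag F) && (G != F).
Definition all_after (k : nat) (m : 'I_k -> nat) (F : factor m) : pred (factor m) :=
  fun G => (tag F < tag G)%N ||
           ((tag F == tag G) && (nat_of_ord (tagged F) < nat_of_ord (tagged G))%N).
Definition class_after (k : nat) (m : 'I_k -> nat) (F : factor m) : pred (factor m) :=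
  fun G => (tag G == tag F) &&
           (nat_of_ord (tagged F) < nat_of_ord (tagged G))%N.

(* Main.v *)
Require Import Defs.
From HB Require Import structures.
From mathcomp Require Import all_boot all_order all_algebra.
Import Order.TTheory GRing.Theory Num.Theory.
Local Open Scope ring_scope.
Set Implicit Arguments. Unset Strict Implicit.

Section Proj.
Variable R : realFieldType.

Lemma mtm0 p q (M : 'M[R]_(p,q)) : M^T *m M = 0 -> M = 0.
Proof.
move=> h; apply/matrixP=> i j.
have := congr1 (fun A : 'M[R]_q => A j j) h; rewrite !mxE => e.
have H := @psumr_eq0P _ _ predT (fun u => M u j ^+ 2) (fun u _ => sqr_ge0 (M u j)).
apply/eqP; rewrite -sqrf_eq0 H //.
by rewrite -[RHS]e; apply: eq_bigr => u _; rewrite mxE.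
Qed.

Lemma ginv_mul p r (B : 'M[R]_(p,r)) (G : 'M[R]_r) :
  B^T *m B *m G *m (B^T *m B) = B^T *m B -> B^T *m B *m G *m B^T = B^T.
Proof.
move=> h; set E := B^T *m B *m G *m B^T - B^T.
have E1 : E *m B = 0 by rewrite /E mulmxBl -[X in X - _]mulmxA h subrr.
suff h2 : E *m E^T = 0.
  have : (E^T)^T *m E^T = 0 by rewrite trmxK.
  by move/mtm0 => h3; apply/eqP; rewrite -subr_eq0 -/E -[E]trmxK h3 trmx0.
rewrite /E [in X in _ *m X]raddfB /= !trmx_mul !trmxK mulmxBr.
by rewrite !mulmxA E1 !mul0mx subrr.
Qed.

Lemma projM_prop p r (B : 'M[R]_(p,r)) :
  let P := projM B in
  [/\ P^T = P, B^T *m P = B^T, (P <= B^T)%MS & P *m P = P].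
Proof.
rewrite /projM; set G := pinvmx (B^T *m B).
have hG : B^T *m B *m G *m (B^T *m B) = B^T *m B by rewrite mulmxKpV.
clearbody G.
have h1 := ginv_mul hG.
have hG' : B^T *m B *m G^T *m (B^T *m B) = B^T *m B.
  by move: (congr1 trmx hG); rewrite !trmx_mul !trmxK !mulmxA.
have h2 := ginv_mul hG'.
have h1t : B *m G^T *m B^T *m B = B.
  by move: (congr1 trmx h1); rewrite !trmx_mul !trmxK !mulmxA.
have sym : B *m G *m B^T = B *m G^T *m B^T.
  have h1r : B^T *m (B *m (G *m B^T)) = B^T.
  by rewrite !mulmxA h1.
  by rewrite -{1}h1t -!mulmxA h1r.
split.
- by rewrite !trmx_mul trmxK mulmxA sym.
- by rewrite !mulmxA h1.
- by rewrite submxMl.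
- have h1r : B^T *m (B *m (G *m B^T)) = B^T.
  by rewrite !mulmxA h1.
  by rewrite -!mulmxA h1r.
Qed.

Lemma proj_unique q p (A : 'M[R]_(q,p)) (P1 P2 : 'M[R]_p) :
  (P1^T <= A)%MS -> (P2^T <= A)%MS -> A *m P1 = A -> A *m P2 = A -> P1 = P2.
Proof.
move=> /submxP[D1 e1] /submxP[D2 e2] h1 h2.
have hD : (P1 - P2)^T = (D1 - D2) *m A by rewrite raddfB /= e1 e2 mulmxBl.
have hA : A *m (P1 - P2) = 0 by rewrite mulmxBr h1 h2 subrr.
have : (P1 - P2)^T *m (P1 - P2) = 0 by rewrite hD -mulmxA hA mulmx0.
by move/mtm0/eqP; rewrite subr_eq0 => /eqP.
Qed.

Lemma submxB_sub q1 q2 p (A B : 'M[R]_(q1,p)) (C : 'M[R]_(q2,p)) :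
  (A <= C)%MS -> (B <= C)%MS -> (A - B <= C)%MS.
Proof. by move=> hA hB; apply: addmx_sub => //; rewrite eqmx_opp. Qed.

Lemma mxDE p q (A B : 'M[R]_(p,q)) i j : (A + B) i j = A i j + B i j.
Proof. by rewrite mxE. Qed.
Lemma mxBE p q (A B : 'M[R]_(p,q)) i j : (A - B) i j = A i j - B i j.
Proof. by rewrite !mxE. Qed.

Section Span.
Variables (I : finType) (n : nat) (s : I -> nat) (lev : forall F : I, 'I_n -> 'I_(s F)).
Local Notation X F := (design R (lev F)).
Local Notation J := (const_mx 1 : 'M[R]_(1,n)).
Local Notation Aset S := (span_set R lev S).
Local Notation PS S := (projS R lev S).

Lemma Aset_sub (S : pred I) q (B : 'M[R]_(q,n)) :
  (J <= B)%MS -> (forall G, S G -> ((X G)^T <= B)%MS) -> (Aset S <= B)%MS.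
Proof.
move=> hJ hG; rewrite /span_set addsmx_sub genmxE hJ /=.
by apply/sumsmx_subP => G SG; rewrite genmxE hG.
Qed.

Lemma J_sub (S : pred I) : (J <= Aset S)%MS.
Proof. by rewrite /span_set (submx_trans _ (addsmxSl _ _)) // genmxE. Qed.

Lemma X_sub (S : pred I) G : S G -> ((X G)^T <= Aset S)%MS.
Proof.
move=> SG; rewrite /span_set (submx_trans _ (addsmxSr _ _)) //.
by apply: (sumsmx_sup G) => //; rewrite genmxE.
Qed.

Lemma Aset_mono (S T : pred I) : (forall G, T G -> S G) -> (Aset T <= Aset S)%MS.
Proof. by move=> h; apply: Aset_sub => [|G /h]; [apply: J_sub | apply: X_sub]. Qed.

Lemma Aset_mul0 (S : pred I) p (N : 'M[R]_(n,p)) :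
  (Aset S *m N = 0) <-> (J *m N = 0 /\ forall G, S G -> (X G)^T *m N = 0).
Proof.
split.
  move=> h; split; first by apply/sub_kermxP; apply: submx_trans (J_sub S) _; apply/sub_kermxP.
  by move=> G SG; apply/sub_kermxP; apply: submx_trans (X_sub SG) _; apply/sub_kermxP.
case=> hJ hG; apply/sub_kermxP; apply: Aset_sub; first by apply/sub_kermxP.
by move=> G SG; apply/sub_kermxP; apply: hG.
Qed.

Lemma PS_prop (S : pred I) :
  [/\ (PS S)^T = PS S, Aset S *m PS S = Aset S, (PS S <= Aset S)%MS
    & PS S *m PS S = PS S].
Proof.
by have [] := projM_prop (Aset S)^T; rewrite trmxK.
Qed.

Lemma PS_char (S : pred I) P : (P^T <= Aset S)%MS -> Aset S *m P = Aset S -> PS S = P.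
Proof.
move=> h1 h2; have [e1 e2 e3 _] := PS_prop S.
by apply: (proj_unique (A := Aset S)) => //; rewrite e1.
Qed.

Lemma Q_prop (S : pred I) :
  let Q := 1%:M - PS S in
  [/\ Q^T = Q, Q *m Q = Q, Aset S *m Q = 0, J *m Q = 0
    & forall G, S G -> (X G)^T *m Q = 0].
Proof.
have [e1 e2 e3 e4] := PS_prop S.
have h : Aset S *m (1%:M - PS S) = 0 by rewrite mulmxBr mulmx1 e2 subrr.
have [hJ hG] := (Aset_mul0 S _).1 h.
split => //.
- by rewrite raddfB /= trmx1 e1.
- by rewrite mulmxBr mulmx1 !mulmxBl mul1mx e4 subrr subr0.
Qed.

Lemma PS_add (T U : pred I) F :
  (forall G, U G = T G || (G == F)) ->
  let Q := 1%:M - PS T in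
  PS U = PS T + Q *m X F *m pinvmx ((X F)^T *m Q *m X F) *m (X F)^T *m Q.
Proof.
move=> hU Q; have [q1 q2 q3 q4 q5] := Q_prop T; rewrite -/Q in q1 q2 q3 q4 q5.
have [e1 e2 e3 e4] := PS_prop T.
set M := Q *m X F.
have MM : M^T *m M = (X F)^T *m Q *m X F.
  by rewrite /M trmx_mul q1 mulmxA -[_ *m Q *m Q]mulmxA q2.
have -> : Q *m X F *m pinvmx ((X F)^T *m Q *m X F) *m (X F)^T *m Q = projM M.
  by rewrite /projM MM /M trmx_mul q1 !mulmxA.
have [f1 f2 f3 f4] := projM_prop M.
have sTU : (Aset T <= Aset U)%MS by apply: Aset_mono => G TG; rewrite hU TG.
have XU : ((X F)^T <= Aset U)%MS by apply: X_sub; rewrite hU eqxx orbT.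
apply: PS_char.
  rewrite raddfD /= e1 f1; apply: addmx_sub; first exact: submx_trans e3 sTU.
  apply: submx_trans f3 _; rewrite /M trmx_mul q1 /Q mulmxBr mulmx1.
  apply: submxB_sub => //; apply: submx_trans (submxMl _ _) _.
  exact: submx_trans e3 sTU.
apply/eqP; rewrite -subr_eq0 -[Z in _ - Z]mulmx1 -mulmxBr -opprB mulmxN oppr_eq0; apply/eqP.
have -> : 1%:M - (PS T + projM M) = Q - projM M by rewrite opprD addrA.
apply/Aset_mul0; split.
  by rewrite mulmxBr q4 sub0r /projM /M !mulmxA q4 !mul0mx oppr0.
move=> G; rewrite hU => /orP[TG|/eqP->].
  by rewrite mulmxBr q5 // sub0r /projM /M !mulmxA q5 // !mul0mx oppr0.
rewrite mulmxBr; have -> : (X F)^T *m projM M = M^T *m projM M.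
  by rewrite /projM; move: (pinvmx _) => G0; rewrite !mulmxA /M trmx_mul q1 !mulmxA -(mulmxA _ Q Q) q2.
by rewrite f2 /M trmx_mul q1 subrr.
Qed.

Lemma PS_ext (S T : pred I) : (forall G, S G = T G) -> PS S = PS T.
Proof. by move=> h; rewrite /projS /span_set (eq_bigl _ _ h). Qed.

Lemma JJt : J *m J^T = (n%:R)%:M.
Proof.
apply/matrixP=> i j; rewrite !ord1 !mxE.
by rewrite (eq_bigr (fun _ => 1)) ?sumr_const ?card_ord // => u _; rewrite !mxE mulr1.
Qed.

Lemma PS0 (S : pred I) : (forall G, S G = false) ->
  PS S = (n%:R)^-1 *: (J^T *m J).
Proof.
move=> h; apply: PS_char.
  rewrite linearZ /= trmx_mul trmxK; apply: scalemx_sub.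
  exact: submx_trans (submxMl _ _) (J_sub S).
apply/eqP; rewrite -subr_eq0 -[Z in _ - Z]mulmx1 -mulmxBr -opprB mulmxN oppr_eq0; apply/eqP.
apply/Aset_mul0; split; last by move=> G; rewrite h.
have [n0|n0] := eqVneq n 0.
  apply/matrixP=> i j; rewrite !mxE big1 // => u _.
  by have := ltn_ord u; rewrite {2}n0.
rewrite mulmxBr mulmx1 -scalemxAr mulmxA JJt mul_scalar_mx scalerA mulVf ?scale1r ?subrr //.
by rewrite pnatr_eq0.
Qed.

Lemma sum_card (P : pred 'I_n) : \sum_u ((P u)%:R : R) = (#|[set u | P u]|)%:R.
Proof.
rewrite -sum1_card natr_sum [RHS]big_mkcond; apply: eq_bigr => u _.
by rewrite inE; case: (P u).
Qed.

End Span.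
Lemma JP (I : finType) n (s : I -> nat) (lev : forall F : I, 'I_n -> 'I_(s F)) (S : pred I) :
  (const_mx 1 : 'M[R]_(1,n)) *m projS R lev S = const_mx 1.
Proof.
have [_ _ _ h _] := Q_prop lev S.
by apply/eqP; rewrite -subr_eq0 -[Z in _ - Z]mulmx1 -mulmxBr -opprB mulmxN h oppr0.
Qed.

Lemma XP (I : finType) n (s : I -> nat) (lev : forall F : I, 'I_n -> 'I_(s F)) (S : pred I) G :
  S G -> (design R (lev G))^T *m projS R lev S = (design R (lev G))^T.
Proof.
have [_ _ _ _ h] := Q_prop lev S => SG.
by apply/eqP; rewrite -subr_eq0 -[Z in _ - Z]mulmx1 -mulmxBr -opprB mulmxN h // oppr0.
Qed.

Section Factors.
Variables (n k : nat) (m : 'I_k -> nat) (s : factor m -> nat)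
  (lev : forall F : factor m, 'I_n -> 'I_(s F)).
Hypothesis interclass : forall F G : factor m, tag F != tag G -> orth_factors (lev F) (lev G).
Local Notation X F := (design R (lev F)).
Local Notation J := (const_mx 1 : 'M[R]_(1,n)).
Local Notation Aset S := (span_set R lev S).
Local Notation PS S := (projS R lev S).

Definition Kc G : 'M[R]_(s G, n) :=
  \matrix_(b, u) ((lev G u == b)%:R - (repl (lev G) b)%:R / n%:R).
Definition rv G : 'M[R]_(s G, 1) := \col_b ((repl (lev G) b)%:R / n%:R).

Lemma Xdec G : (X G)^T = Kc G + rv G *m J.
Proof.
apply/matrixP => b u; rewrite !mxE big_ord1 !mxE mulr1.
by rewrite subrK.
Qed.

Lemma repl0 (n0 : n = 0%N) (sA : nat) (l : 'I_n -> 'I_sA) a : repl l a = 0%N.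
Proof.
apply/eqP; rewrite -leqn0; apply: leq_trans (max_card _) _.
by rewrite card_ord n0.
Qed.

Lemma incid0 (n0 : n = 0%N) (sA sB : nat) (l1 : 'I_n -> 'I_sA) (l2 : 'I_n -> 'I_sB) a b :
  incid l1 l2 a b = 0%N.
Proof.
apply/eqP; rewrite -leqn0; apply: leq_trans (max_card _) _.
by rewrite card_ord n0.
Qed.

Lemma orthR F G a b : tag F != tag G ->
  (incid (lev F) (lev G) a b)%:R = (repl (lev F) a)%:R * (repl (lev G) b)%:R / n%:R :> R.
Proof.
move=> /interclass h.
have [n0|n0] := eqVneq n 0%N.
  by rewrite incid0 // repl0 // mul0r mul0r.
have n0R : (n%:R : rat) != 0 by rewrite pnatr_eq0.
have e : (incid (lev F) (lev G) a b * n = repl (lev F) a * repl (lev G) b)%N.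
  apply/eqP; rewrite -(eqr_nat rat) natrM (h a b) natrM mulfVK //.
have n0R' : (n%:R : R) != 0 by rewrite pnatr_eq0.
by rewrite -[LHS](mulfK n0R') -[_%:R * n%:R]natrM e natrM.
Qed.

Lemma KX G H : tag G != tag H -> Kc G *m X H = 0.
Proof.
move=> ne; apply/matrixP => b t; rewrite !mxE.
under eq_bigr => u _ do rewrite !mxE mulrBl -natrM mulnb.
rewrite sumrB -mulr_sumr !sum_card.
rewrite (orthR _ _ ne) /incid /repl; set x := (_ / _).
by rewrite mulrAC subrr.
Qed.

Lemma KJ G : Kc G *m J^T = 0.
Proof.
apply/matrixP => b t; rewrite !mxE.
under eq_bigr => u _ do rewrite !mxE mulr1.
rewrite sumrB sum_card sumr_const card_ord.
have [n0|n0] := eqVneq n 0%N.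
  by rewrite /repl -/(repl (lev G) b) repl0 // !mul0r mul0rn subrr.
by rewrite -[_ *+ n]mulr_natl mulrCA mulfV ?pnatr_eq0 // mulr1 /repl subrr.
Qed.

Lemma KP G (S : pred (factor m)) :
  (forall H, S H -> tag H != tag G) -> Kc G *m PS S = 0.
Proof.
move=> hS; have [e1 _ e3 _] := PS_prop lev S.
have [D eD] := submxP e3.
have h0 : Aset S *m (Kc G)^T = 0.
  apply/Aset_mul0; split.
    by rewrite -[J]trmxK -trmx_mul KJ trmx0.
  move=> H SH; rewrite -trmx_mul KX ?trmx0 //.
  by rewrite eq_sym hS.
by rewrite -e1 eD trmx_mul mulmxA -[Kc G *m _]trmxK trmx_mul trmxK h0 trmx0 mul0mx.
Qed.

Lemma cross G F (S : pred (factor m)) : tag G != tag F ->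
  (forall H, S H -> tag H == tag F) ->
  (X G)^T *m (1%:M - PS S) *m X F = 0.
Proof.
move=> ne hS; rewrite Xdec mulmxDl mulmxDl.
have [_ _ _ q4 _] := Q_prop lev S.
rewrite -(mulmxA (rv G)) q4 mulmx0 mul0mx addr0.
rewrite mulmxBr mulmx1 mulmxBl KX // KP ?mul0mx ?subrr // => H /hS /eqP ->.
by rewrite eq_sym.
Qed.

Lemma PS_X F (S T : pred (factor m)) :
  (forall H, T H -> S H) -> (forall H, T H -> tag H == tag F) ->
  (forall H, S H -> ~~ T H -> tag H != tag F) ->
  (1%:M - PS S) *m X F = (1%:M - PS T) *m X F.
Proof.
move=> hTS hT hS.
suff e : PS S *m X F = PS T *m X F by rewrite !mulmxBl e.
have [e1 e2 e3 _] := PS_prop lev S; have [f1 _ f3 _] := PS_prop lev T.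
have [_ _ _ q4 q5] := Q_prop lev T.
set D := PS S *m X F - PS T *m X F.
have hD : (D^T <= Aset S)%MS.
  rewrite /D raddfB /= (trmx_mul (PS S)) (trmx_mul (PS T)) e1 f1; apply: submxB_sub.
    exact: submx_trans (submxMl _ _) e3.
  apply: submx_trans (submxMl _ _) _; exact: submx_trans f3 (Aset_mono lev hTS).
have h0 : Aset S *m ((1%:M - PS T) *m X F) = 0.
  apply/Aset_mul0; split; first by rewrite mulmxA q4 mul0mx.
  move=> H SH; case TH: (T H); first by rewrite mulmxA q5 // mul0mx.
  by rewrite mulmxA cross // hS // TH.
have hA : Aset S *m D = 0.
  rewrite /D mulmxBr (mulmxA _ (PS S)) e2.
  by move: h0; rewrite mulmxBl mul1mx mulmxBr.
have [W eW] := submxP hD.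
have : D^T *m D = 0 by rewrite eW -mulmxA hA mulmx0.
by move/mtm0/eqP; rewrite subr_eq0 => /eqP.
Qed.

Definition Ccl (i : 'I_k) : pred (factor m) := fun G => tag G == i.

Lemma XP_other G (S : pred (factor m)) :
  (forall H, S H -> tag H != tag G) -> (X G)^T *m PS S = rv G *m J.
Proof.
by move=> h; rewrite Xdec mulmxDl KP // add0r -mulmxA JP.
Qed.

Lemma PS_all : PS predT = PS xpred0 + \sum_(i < k) (PS (Ccl i) - PS xpred0).
Proof.
have sym : (PS xpred0 + \sum_(i < k) (PS (Ccl i) - PS xpred0))^T
           = PS xpred0 + \sum_(i < k) (PS (Ccl i) - PS xpred0).
  rewrite raddfD raddf_sum /=; have [-> _ _ _] := PS_prop lev xpred0.
  congr (_ + _); apply: eq_bigr => i _; rewrite raddfB /=.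
  by have [-> _ _ _] := PS_prop lev (Ccl i); have [-> _ _ _] := PS_prop lev xpred0.
have sub S : (PS S <= Aset predT)%MS.
  have [_ _ e3 _] := PS_prop lev S; exact: submx_trans e3 (Aset_mono lev (fun _ _ => isT)).
apply: PS_char; first rewrite sym.
  apply: addmx_sub => //; apply: summx_sub => i _; exact: submxB_sub.
apply/eqP; rewrite -subr_eq0 -[Z in _ - Z]mulmx1 -mulmxBr -opprB mulmxN oppr_eq0; apply/eqP.
apply/Aset_mul0; split.
  rewrite mulmxBr mulmx1 mulmxDr JP mulmx_sumr big1 ?addr0 ?subrr // => i _.
  by rewrite mulmxBr !JP subrr.
move=> G _; rewrite mulmxBr mulmx1 mulmxDr mulmx_sumr (bigD1 (tag G)) //=.
rewrite big1 ?addr0.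
  by rewrite mulmxBr (@XP _ _ _ lev (Ccl (tag G)) G) /Ccl // [_ + (_ - _)]addrC subrK subrr.
move=> i ne; rewrite mulmxBr !XP_other ?subrr //.
by move=> H; rewrite /Ccl => /eqP ->.
Qed.

Lemma SSadj_eq F (S : pred (factor m)) Y :
  SSfac lev F S Y = (Y^T *m ((1%:M - PS S) *m X F)
     *m pinvmx ((X F)^T *m ((1%:M - PS S) *m X F))
     *m ((1%:M - PS S) *m X F)^T *m Y) 0 0.
Proof.
rewrite /SSfac /SSadj /=; have [q1 _ _ _ _] := Q_prop lev S.
move: (1%:M - PS S) q1 => Q q1.
rewrite -(mulmxA (X F)^T Q (X F)); move: (pinvmx _) => G0.
by rewrite trmx_mul q1 !mulmxA.
Qed.

Definition Vp (i : 'I_k) (j : nat) : pred (factor m) :=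
  fun G => (tag G == i) && (j <= tagged G)%N.

Lemma SS_step i (j : 'I_(m i)) Y :
  SSfac lev (Tagged (fun i => 'I_(m i)) j) (class_after (Tagged (fun i => 'I_(m i)) j)) Y
  = (Y^T *m PS (Vp i j) *m Y) 0 0 - (Y^T *m PS (Vp i j.+1) *m Y) 0 0.
Proof.
have hT : PS (class_after (Tagged (fun i => 'I_(m i)) j)) = PS (Vp i j.+1).
  by apply: PS_ext => G; rewrite /class_after /Vp.
have hU : forall G, Vp i j G = Vp i j.+1 G || (G == Tagged (fun i => 'I_(m i)) j).
  case=> i' j'; rewrite /Vp /=; case: (eqVneq i' i) => [e|ne].
    subst i'; rewrite eq_Tagged /= leq_eqVlt orbC; congr (_ || _).
    by rewrite eq_sym.
  rewrite /=; apply/esym/negbTE; apply: contra ne => /eqP h.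
  by have /= -> := congr1 tag h.
move: (PS_add lev hU) => /= e.
rewrite /SSfac /SSadj /= hT e.
move: (PS (Vp i j.+1)) (pinvmx _) => P G0.
by rewrite (mulmxDr Y^T P) (mulmxDl (Y^T *m P)) mxDE [RHS]addrC addKr !mulmxA.
Qed.

Lemma SS_class i Y :
  \sum_(j < m i) SSfac lev (Tagged (fun i => 'I_(m i)) j)
                   (class_after (Tagged (fun i => 'I_(m i)) j)) Y
  = (Y^T *m (PS (Ccl i) - PS xpred0) *m Y) 0 0.
Proof.
set f := fun j : nat => (Y^T *m PS (Vp i j) *m Y) 0 0.
rewrite (eq_bigr (fun j : 'I_(m i) => f j - f j.+1)); last by move=> j _; rewrite SS_step.
rewrite -(big_mkord xpredT (fun j => f j - f j.+1)).
have -> : \sum_(0 <= j < m i) (f j - f j.+1) = - \sum_(0 <= j < m i) (f j.+1 - f j).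
  by rewrite -sumrN; apply: eq_bigr => j _; rewrite opprB.
rewrite telescope_sumr // opprB /f.
have -> : PS (Vp i 0) = PS (Ccl i).
  by apply: PS_ext => G; rewrite /Vp /Ccl leq0n andbT.
have -> : PS (Vp i (m i)) = PS xpred0.
  apply: PS_ext; case=> i' j'; rewrite /Vp /=.
  case: eqP => // e; subst i'; by rewrite leqNgt ltn_ord.
by rewrite mulmxBr mulmxBl mxBE.
Qed.

Lemma SS_tot (Y : 'cV[R]_n) :
  (Y^T *m (1%:M - PS xpred0) *m Y) 0 0
  = \sum_(u < n) Y u 0 ^+ 2 - (\sum_(u < n) Y u 0) ^+ 2 / n%:R.
Proof.
rewrite (@PS0 _ _ _ lev xpred0) // mulmxBr mulmx1 mulmxBl mxBE.
congr (_ - _).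
  by rewrite mxE; apply: eq_bigr => u _; rewrite mxE expr2.
rewrite -scalemxAr -scalemxAl mxE mulrC; congr (_ * _).
have -> : Y^T *m (J^T *m J) *m Y = (J *m Y)^T *m (J *m Y) by rewrite trmx_mul !mulmxA.
rewrite mxE big_ord1 !mxE expr2; congr (_ * _); apply: eq_bigr => u _; by rewrite !mxE mul1r.
Qed.

End Factors.
End Proj.

Theorem theorem4p6 (R : realFieldType) (n k : nat) (m : 'I_k -> nat)
  (s : factor m -> nat) (lev : forall F : factor m, 'I_n -> 'I_(s F))
  (all_levels : forall (F : factor m) (t : 'I_(s F)), exists u, lev F u = t)
  (interclass : forall F G : factor m, tag F != tag G -> orth_factors (lev F) (lev G))
  (Y : 'cV[R]_n) :
  (forall (i : 'I_k) (j : 'I_(m i)),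
     let F : factor m := Tagged (fun i => 'I_(m i)) j in
     let X := design R (lev F) in
     (* (a) *)
     (X^T *m (1%:M - projS R lev (all_but F)) *m X
        = X^T *m (1%:M - projS R lev (class_but F)) *m X
      /\ X^T *m (1%:M - projS R lev (all_but F)) *m Y
        = X^T *m (1%:M - projS R lev (class_but F)) *m Y)
     (* (b) *)
     /\ SSfac lev F (all_but F) Y = SSfac lev F (class_but F) Y
     /\ SSfac lev F (all_after F) Y = SSfac lev F (class_after F) Y)
  /\
  (* (c) *)
  (Y^T *m (1%:M - projS R lev predT) *m Y) 0 0
    = (\sum_(u < n) Y u 0 ^+ 2 - (\sum_(u < n) Y u 0) ^+ 2 / n%:R)
      - \sum_(i < k) \sum_(j < m i)
          SSfac lev (Tagged (fun i => 'I_(m i)) j)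
                (class_after (Tagged (fun i => 'I_(m i)) j)) Y.

Proof.
have hQsym : forall S : pred (factor m), (1%:M - projS R lev S)^T = 1%:M - projS R lev S.
  by move=> S; have [q1 _ _ _ _] := Q_prop R lev S.
have key : forall (F : factor m) (S T : pred (factor m)),
  (1%:M - projS R lev S) *m design R (lev F) = (1%:M - projS R lev T) *m design R (lev F) ->
  [/\ (design R (lev F))^T *m (1%:M - projS R lev S) *m design R (lev F)
        = (design R (lev F))^T *m (1%:M - projS R lev T) *m design R (lev F),
      (design R (lev F))^T *m (1%:M - projS R lev S) *m Y
        = (design R (lev F))^T *m (1%:M - projS R lev T) *m Y
    & SSfac lev F S Y = SSfac lev F T Y].
  move=> F S T h; split.
  - by rewrite -!mulmxA h.
  - have e : forall S', (design R (lev F))^T *m (1%:M - projS R lev S')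
                 = ((1%:M - projS R lev S') *m design R (lev F))^T.
      by move=> S'; rewrite trmx_mul hQsym.
    by rewrite !e h.
  - by rewrite !(SSadj_eq lev) h.
split.
  move=> i j F X.
  have h1 : (1%:M - projS R lev (all_but F)) *m X = (1%:M - projS R lev (class_but F)) *m X.
    by apply: (PS_X R interclass) => H; rewrite /all_but /class_but;
      case: (H != F); case: (tag H == tag F).
  have h2 : (1%:M - projS R lev (all_after F)) *m X = (1%:M - projS R lev (class_after F)) *m X.
    apply: (PS_X R interclass).
    - move=> H /andP[e lt]; rewrite /all_after; apply/orP; right.
      by rewrite eq_sym e lt.
    - by move=> H /andP[-> _].
    - move=> H /orP[lt|/andP[e lt]].
        by move=> _; apply: (contraTneq _ lt) => e; rewrite e ltnn.
      by rewrite /class_after eq_sym e lt.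
  have [a1 a2 a3] := key _ _ _ h1.
  have [_ _ b3] := key _ _ _ h2.
  by [].
rewrite (PS_all R interclass) -(SS_tot lev Y).
rewrite opprD addrA mulmxBr mulmxBl mxBE mulmx_sumr mulmx_suml summxE.
congr (_ - _); apply: eq_bigr => i _.
by rewrite (SS_class lev).
Qed.
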